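(* Let $N_c\ge 1$. Let $\mathcal{D}_{xx}\in\mathbb{R}^{N_c\times N_c}$ be a block diagonal matrix whose diagonal blocks are $\mathcal{D}^{(n_k)}(a_k,b_k)$, $k=1,\dots,S$ (with $\sum_k n_k=N_c$), and let $\mathcal{D}_{yy}\in\mathbb{R}^{N_c\times N_c}$ be a block diagonal matrix whose diagonal blocks are $\mathcal{D}^{(m_l)}(c_l,d_l)$, $l=1,\dots,T$ (with $\sum_l m_l=N_c$). Let $P\in\mathbb{R}^{N_c\times N_c}$ be a permutation matrix. Assume that every block, in both $\mathcal{D}_{xx}$ and $\mathcal{D}_{yy}$, with parameters $(n,a,b)$ satisfies one of: (1) $n=1$ and $a>0$; (2) $n=2$, $a>0$ and $ab>1$; (3) $n\ge 3$, $a>\frac{n-2}{n-1}$, $b>\frac{n-2}{n-1}$ and $a>\frac{(n-2)b-(n-3)}{(n-1)b-(n-2)}$. Then the matrix $-\mathcal{L}:=\mathcal{D}_{xx}+P^T\mathcal{D}_{yy}P$ is symmetric positive definite.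
   Context: $\mathcal{D}^{(n)}(a,b)\in\mathbb{R}^{n\times n}$ is defined by: $\mathcal{D}^{(1)}(a,b)=(a)$; $\mathcal{D}^{(2)}(a,b)=\begin{pmatrix} a & -1\\ -1 & b\end{pmatrix}$; and for $n\ge 3$, the tridiagonal matrix with all sub- and super-diagonal entries equal to $-1$, diagonal entries $(a,2,\dots,2,b)$ (first entry $a$, last entry $b$, others $2$), and all other entries zero. In the application, $N_c$ is the number of computational grid points of a 2D embedded boundary discretization, $\mathcal{D}_{xx}$ is the (scaled) discretization of $-\partial_{xx}$ along all horizontal grid-line segments in lexicographic (fast-in-$x$) ordering, $\mathcal{D}_{yy}$ is the discretization of $-\partial_{yy}$ along all vertical segments in fast-in-$y$ ordering, and $P$ is the permutation converting the fast-in-$x$ ordering to the fast-in-$y$ ordering, so that $\mathcal{L}$ is the discrete Laplacian. *)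

(* Defs.v *)
From HB Require Import structures.
From mathcomp Require Import all_boot all_order all_algebra all_fingroup.
Set Implicit Arguments. Unset Strict Implicit. Unset Printing Implicit Defensive.
Import Order.TTheory GRing.Theory Num.Theory.
Local Open Scope ring_scope.

(* The n x n tridiagonal matrix D^(n)(a,b): diagonal (a,2,...,2,b),
   off-diagonals -1.  For n = 1 it is (a); for n = 2 it is [[a,-1],[-1,b]]. *)
Definition Dmat (R : ringType) (n : nat) (a b : R) : 'M[R]_n :=
  \matrix_(i < n, j < n)
    if i == j then (if (i : nat) == 0%N then a
                    else if (i : nat) == n.-1 then b else 2)
    else if ((i : nat) == j.+1) || ((j : nat) == i.+1) then -1 else 0.

Definition block_ok (R : realFieldType) (n : nat) (a b : R) : Prop :=
  [\/ (n = 1%N /\ 0 < a),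
      (n = 2%N /\ 0 < a /\ 1 < a * b)
    | [/\ (3 <= n)%N,
          (n - 2)%:R / (n - 1)%:R < a,
          (n - 2)%:R / (n - 1)%:R < b &
          ((n - 2)%:R * b - (n - 3)%:R) / ((n - 1)%:R * b - (n - 2)%:R) < a]].

Definition symmetric_mx (R : ringType) (n : nat) (A : 'M[R]_n) : Prop :=
  A^T = A.

Definition posdef_mx (R : realFieldType) (n : nat) (A : 'M[R]_n) : Prop :=
  forall v : 'cV[R]_n, v != 0 -> 0 < (v^T *m A *m v) 0 0.

(* Main.v *)
Require Import Defs.
From HB Require Import structures.
From mathcomp Require Import all_boot all_order all_algebra all_fingroup.
From mathcomp Require Import ring lra zify.
Import Order.TTheory GRing.Theory Num.Theory.
Local Open Scope ring_scope.

Section M.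
Variable R : realFieldType.

Definition dg (n : nat) (a b : R) (i : nat) : R :=
  if i == 0%N then a else if i == n.-1 then b else 2.

Definition E (n : nat) (a b : R) (i j : nat) : R :=
  if i == j then dg n a b i
  else if (i == j.+1) || (j == i.+1) then -1 else 0.

Lemma DmatE n a b (i j : 'I_n) : Dmat n a b i j = E n a b i j.
Proof. by rewrite mxE. Qed.

Lemma E_dec n a b i j : E n a b j i =
  (if j == i then dg n a b i else 0) - (if i == j.+1 then 1 else 0)
  - (if j == i.+1 then 1 else 0).
Proof.
rewrite /E; have [->|ne] := eqVneq j i.
  by rewrite ltn_eqF // !subr0.
rewrite sub0r; have [->|ne2] := eqVneq i j.+1.
  by rewrite orbT ltn_eqF // subr0.
by rewrite orbF oppr0 sub0r; case: (j == i.+1); rewrite ?oppr0.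
Qed.

Lemma sum_pick n (c : nat) (f : nat -> R) :
  \sum_(0 <= j < n) (if j == c then f j else 0) = if (c < n)%N then f c else 0.
Proof.
elim: n => [|n IH]; first by rewrite big_geq.
rewrite big_nat_recr //= IH.
have [lt|gt|->] := ltngtP c n.
- by rewrite addr0 ltnS ltnW.
- by rewrite addr0 ltnS leqNgt gt.
- by rewrite ltnSn add0r.
Qed.

Lemma sum_ord_nat k (F : 'I_k.+1 -> R) :
  \sum_(i < k.+1) F i = \sum_(0 <= i < k.+1) F (inord i).
Proof. by rewrite big_mkord; apply: eq_bigr => i _; rewrite inord_val. Qed.

Lemma form_nat k (A : 'M[R]_k.+1) (v : 'cV[R]_k.+1) :
  (v^T *m A *m v) 0 0 = \sum_(0 <= i < k.+1) \sum_(0 <= j < k.+1)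
     v (inord j) 0 * A (inord j) (inord i) * v (inord i) 0.
Proof.
rewrite mxE sum_ord_nat; apply: eq_bigr => i _.
rewrite mxE big_distrl /= sum_ord_nat; apply: eq_bigr => j _.
by rewrite mxE.
Qed.

Definition Q (k : nat) (p q : R) (w : nat -> R) : R :=
  p * w 0%N ^+ 2 + 2 * \sum_(0 <= i < k) w i.+1 ^+ 2 + q * w k ^+ 2
  - 2 * \sum_(0 <= i < k) w i * w i.+1.

Fixpoint pos (k : nat) (p q : R) : Prop :=
  match k with 0 => 0 < p + q | k'.+1 => 0 < p /\ pos k' (2 - p^-1) q end.

Lemma Q_rec k (p q : R) (w : nat -> R) : 0 < p ->
  Q k.+1 p q w = p * (w 0%N - w 1%N / p) ^+ 2 + Q k (2 - p^-1) q (fun i => w i.+1).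
Proof.
move=> hp; rewrite /Q !big_nat_recl //=.
have hp0 : p != 0 by rewrite gt_eqF.
by field.
Qed.

Lemma Q_pos k : forall (p q : R) (w : nat -> R), pos k p q ->
  0 <= Q k p q w /\ (Q k p q w = 0 -> forall i, (i <= k)%N -> w i = 0).
Proof.
elim: k => [|k IH] p q w /=.
  move=> h; rewrite /Q !big_geq // !mulr0 subr0 addr0 -mulrDl.
  split; first by rewrite mulr_ge0 ?sqr_ge0 // ltW.
  move=> /eqP; rewrite mulf_eq0 (gt_eqF h) /= expf_eq0 /= => /eqP h0 i.
  by rewrite leqn0 => /eqP ->.
move=> [hp hk]; rewrite Q_rec //.
have [h1 h2] := IH _ _ (fun i => w i.+1) hk.
have h3 : 0 <= p * (w 0%N - w 1%N / p) ^+ 2 by rewrite mulr_ge0 ?sqr_ge0 // ltW.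
split; first exact: addr_ge0.
move=> /eqP; rewrite paddr_eq0 // => /andP[/eqP e1 /eqP e2].
have hw : forall i, (i <= k)%N -> w i.+1 = 0 by exact: h2.
case=> [|i] hi; last exact: hw.
move: e1; rewrite (hw 0%N) // mul0r subr0 => /eqP; rewrite mulf_eq0 (gt_eqF hp) /=.
by rewrite expf_eq0 /= => /eqP.
Qed.

Lemma pos_ind k : forall p q : R, 0 < (k%:R + 1) * p - k%:R ->
  k%:R * p - (k%:R - 1) < (q + 2) * ((k%:R + 1) * p - k%:R) -> pos k.+1 p q.
Proof.
elim: k => [|k IH] p q.
  rewrite /= !mul0r !add0r !subr0 mul1r opprK => hp h; split => //.
  have hp0 : p != 0 by rewrite gt_eqF.
  have -> : 2 - p^-1 + q = ((q + 2) * p - 1) / p by field.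
  by rewrite divr_gt0 // subr_gt0.
rewrite -natr1 => h1 h2.
set x : R := k%:R in h1 h2 *.
have hx : 0 <= x by rewrite /x ler0n.
have hp : 0 < p by nra.
have hp0 : p != 0 by rewrite gt_eqF.
split => //; apply: IH.
  have -> : (x + 1) * (2 - p^-1) - x = ((x + 1 + 1) * p - (x + 1)) / p by field.
  by rewrite divr_gt0.
have -> : (x + 1) * (2 - p^-1) - x = ((x + 1 + 1) * p - (x + 1)) / p by field.
have -> : x * (2 - p^-1) - (x - 1) = ((x + 1) * p - x) / p by field.
rewrite mulrA ltr_pM2r ?invr_gt0 //.
move: h2; congr (_ < _); ring.
Qed.

Lemma sum_last n (f : nat -> R) :
  \sum_(0 <= i < n.+1) (if (i.+1 < n.+1)%N then f i else 0) = \sum_(0 <= i < n) f i.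
Proof.
rewrite big_nat_recr //= ltnn addr0; apply: eq_big_nat => i /andP[_ hi].
by rewrite ltnS hi.
Qed.

Lemma Dmat_form k a b (v : 'cV[R]_k.+1) :
  (v^T *m Dmat k.+1 a b *m v) 0 0 =
  Q k a (if k is 0 then 0 else b - 2) (fun i => v (inord i) 0).
Proof.
set w : nat -> R := fun i => v (inord i) 0.
rewrite form_nat.
have step : forall i, (0 <= i < k.+1)%N -> \sum_(0 <= j < k.+1)
     v (inord j) 0 * Dmat k.+1 a b (inord j) (inord i) * v (inord i) 0 =
   \sum_(0 <= j < k.+1) (if j == i then w j * dg k.+1 a b i * w i else 0)
   - \sum_(0 <= j < k.+1) (if i == j.+1 then w j * w i else 0)
   - \sum_(0 <= j < k.+1) (if j == i.+1 then w i * w j else 0).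
  move=> i /andP[_ hi]; rewrite -!sumrB; apply: eq_big_nat => j /andP[_ hj].
  rewrite DmatE !inordK // E_dec -/(w j) -/(w i).
  by case: (j == i); case: (i == j.+1); case: (j == i.+1); rewrite /=; ring.
under eq_big_nat => i hi do rewrite (step i hi).
rewrite !sumrB.
under eq_big_nat => i /andP[_ hi] do rewrite (sum_pick _ _ (fun j => w j * dg k.+1 a b i * w i)) hi.
rewrite [X in _ - X - _]exchange_big_nat /=.
under [X in _ - X - _]eq_bigr => j _ do rewrite (sum_pick _ _ (fun i => w j * w i)).
under [X in _ - X]eq_bigr => i _ do rewrite (sum_pick _ _ (fun j => w i * w j)).
rewrite !sum_last /Q.
clearbody w; clear step v.
case: k w => [|k] w.
  rewrite big_nat1 !big_geq // /dg /=; ring.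
rewrite big_nat_recl // big_nat_recr //= [\sum_(0 <= i < k.+1) w i.+1 ^+ 2]big_nat_recr //=.
have -> : \sum_(0 <= i < k) w i.+1 * dg k.+2 a b i.+1 * w i.+1 =
    2 * \sum_(0 <= i < k) w i.+1 ^+ 2.
  rewrite mulr_sumr; apply: eq_big_nat => i /andP[_ hi].
  by rewrite /dg /= ltn_eqF //; ring.
rewrite /dg /= eqxx; ring.
Qed.

Lemma Dmat_tr n a b : (Dmat n a b : 'M[R]_n)^T = Dmat n a b.
Proof.
apply/matrixP => i j; rewrite mxE !DmatE /E.
have [e|ne] := eqVneq (j : nat) (i : nat).
  by have -> : j = i by apply: val_inj.
by rewrite orbC.
Qed.

Lemma Dmat_posdef n a b : block_ok n a b -> posdef_mx (Dmat n a b : 'M[R]_n).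
Proof.
move=> hok.
have [k ek hpos] : exists2 k, n = k.+1 & pos k a (if k is 0 then 0 else b - 2).
  case: hok => [[-> ha]|[-> [ha hab]]|[hn h1 h2 h3]].
  - by exists 0%N => //=; rewrite addr0.
  - exists 1%N => //; apply: (pos_ind 0); rewrite ?add0r ?mul0r ?subr0 ?mul1r //.
    by rewrite sub0r opprK subrK mulrC.
  - exists n.-1; first by lia.
    have [k' ek'] : exists k', n = k'.+3 by exists (n - 3)%N; lia.
    subst n.
    have e2 : (k'.+3 - 2 = k'.+1)%N by lia.
    have e1 : (k'.+3 - 1 = k'.+2)%N by lia.
    have e3 : (k'.+3 - 3 = k')%N by lia.
    rewrite e1 e2 e3 in h1 h2 h3.
    set x : R := k'%:R in h1 h2 h3.
    have E1 : (k'.+1)%:R = x + 1 :> R by rewrite /x natr1.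
    have E2 : (k'.+2)%:R = x + 2 :> R by rewrite /x -natr1 -natr1; ring.
    rewrite E1 E2 in h1 h2 h3.
    have hx : 0 <= x by rewrite /x ler0n.
    move: h1 h2; rewrite !ltr_pdivrMr; try nra.
    move=> h1 h2; move: h3; rewrite ltr_pdivrMr; last nra.
    move=> h3 /=; apply: (pos_ind k'.+1); rewrite E1; nra.
subst n => v nz.
rewrite Dmat_form.
have [h0 hz] := @Q_pos k _ _ (fun i => v (inord i) 0) hpos.
rewrite lt_def h0 andbT; apply/eqP => /hz hw.
move/eqP: nz; apply; apply/matrixP => i j.
rewrite ord1 mxE -(hw i) ?inord_val //; by rewrite -ltnS ltn_ord.
Qed.


Definition psd_mx {n} (A : 'M[R]_n) := forall v : 'cV[R]_n, 0 <= (v^T *m A *m v) 0 0.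

Lemma posdef_psd n (A : 'M[R]_n) : posdef_mx A -> psd_mx A.
Proof.
move=> h v; have [->|nz] := eqVneq v 0; last exact/ltW/h.
by rewrite trmx0 !mul0mx mxE.
Qed.

Lemma cast_posdef m n (e : m = n) (A : 'M[R]_m) :
  posdef_mx A -> posdef_mx (castmx (e, e) A).
Proof. by case: n / e; rewrite castmx_id. Qed.

Lemma cast_sym m n (e : m = n) (A : 'M[R]_m) :
  symmetric_mx A -> symmetric_mx (castmx (e, e) A).
Proof. by case: n / e; rewrite castmx_id. Qed.

Lemma mxdiag_posdef S (p_ : 'I_S -> nat) (B : forall i, 'M[R]_(p_ i)) :
  (forall i, posdef_mx (B i)) -> posdef_mx (\mxdiag_i B i).
Proof.
move=> h v nz.
case: (pickP (fun i => submxcol v i != 0)) => [i nzi | all0]; last first.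
  move/eqP: nz; case; rewrite -[v]submxcolK.
  under eq_mxcol => i do rewrite (eqP (negbFE (all0 i))).
  by rewrite mxcol0.
rewrite -[v]submxcolK tr_mxcol mul_mxrow_mxdiag mul_mxrow_mxcol summxE.
rewrite [X in 0 < X](bigD1 i) //=.
have h1 := h i _ nzi.
have h2 : 0 <= \sum_(j | j != i) ((submxcol v j)^T *m B j *m submxcol v j) 0 0.
  by apply: sumr_ge0 => j _; apply: posdef_psd.
lra.
Qed.

Lemma mxdiag_sym S (p_ : 'I_S -> nat) (B : forall i, 'M[R]_(p_ i)) :
  (forall i, symmetric_mx (B i)) -> symmetric_mx (\mxdiag_i B i).
Proof. by move=> h; rewrite /symmetric_mx tr_mxdiag; apply: eq_mxdiag. Qed.

Lemma conj_psd n (A P : 'M[R]_n) : psd_mx A -> psd_mx (P^T *m A *m P).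
Proof.
move=> h v.
have -> : v^T *m (P^T *m A *m P) *m v = (P *m v)^T *m A *m (P *m v).
  by rewrite trmx_mul !mulmxA.
exact: h.
Qed.

End M.
Theorem theorem2 (R : realFieldType) (Nc S T : nat)
  (n : 'I_S -> nat) (a b : 'I_S -> R)
  (m : 'I_T -> nat) (c d : 'I_T -> R)
  (hNc : (1 <= Nc)%N)
  (hn : (\sum_(k < S) n k)%N = Nc) (hm : (\sum_(l < T) m l)%N = Nc)
  (Dxx Dyy P : 'M[R]_Nc)
  (hDxx : Dxx = castmx (hn, hn) (\mxdiag_(k < S) Dmat (n k) (a k) (b k)))
  (hDyy : Dyy = castmx (hm, hm) (\mxdiag_(l < T) Dmat (m l) (c l) (d l)))
  (hP : is_perm_mx P)
  (hx : forall k, block_ok (n k) (a k) (b k))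
  (hy : forall l, block_ok (m l) (c l) (d l)) :
  symmetric_mx (Dxx + P^T *m Dyy *m P) /\ posdef_mx (Dxx + P^T *m Dyy *m P).
Proof.
have sx : Dxx^T = Dxx.
  by rewrite hDxx; apply: cast_sym; apply: mxdiag_sym => k; apply: Dmat_tr.
have sy : Dyy^T = Dyy.
  by rewrite hDyy; apply: cast_sym; apply: mxdiag_sym => k; apply: Dmat_tr.
have px : posdef_mx Dxx.
  by rewrite hDxx; apply: cast_posdef; apply: mxdiag_posdef => k; apply: Dmat_posdef.
have py : psd_mx R Dyy.
  rewrite hDyy; apply: posdef_psd; apply: cast_posdef; apply: mxdiag_posdef => k.
  exact: Dmat_posdef.
split.
  by rewrite /symmetric_mx linearD /= !trmx_mul trmxK sx sy mulmxA.
move=> v nz.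
rewrite mulmxDr mulmxDl mxE.
have h1 := px v nz.
have h2 := @conj_psd R _ _ P py v.
lra.
Qed.
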